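(* Let $G=\langle c,s\rangle$ and $K$ be as in the context, let $n\ge1$ and let $\gamma,\gamma_1,\ldots,\gamma_n,\beta_1,\ldots,\beta_n$ be integers. For $i=1,\ldots,n$ let $B_i=\{j:\gamma_j=\gamma_i\}$, let $\gamma_0=\max\{|\gamma_1|,\ldots,|\gamma_n|\}$, and let $F=(c^{s^{\gamma_1}})^{\beta_1}\cdots(c^{s^{\gamma_n}})^{\beta_n}\in K^{\langle s\rangle}$, regarded as a function $\langle s\rangle\to K$. Then the element $w=F s^{\gamma}$ is trivial in $G$ if and only if $\gamma=0$, $\sum_{j\in B_i}\beta_j=0$ for $i=1,\ldots,n$, and $F(s^{\mu})=1$ in $K$ for all integers $\mu$ with $-3\gamma_0\le\mu\le3\gamma_0$.
   Context: Notation: $x^y=yxy^{-1}$. For groups $A,B$, the wreath product $A\,\mathrm{Wr}\,B$ is the semidirect product $A^B\rtimes B$, where $A^B$ is the group of all functions $B\to A$ with pointwise multiplication and $B$ acts by $(bf)(x)=f(xb)$, written $f^b=bfb^{-1}$. $H$ is a group generated by a countable set $\{a^{(1)},a^{(2)},\ldots\}$. Let $Z=\langle z\rangle$ be infinite cyclic and $b^{(i)}\in H^Z$ with $b^{(i)}(z^k)=a^{(i)}$ if $k>0$ and $1$ otherwise; $K=\langle z,b^{(i)}\ (i\in\mathbb{N})\rangle\le H\,\mathrm{Wr}\,Z$. Let $\langle s\rangle$ be infinite cyclic and $c\in K^{\langle s\rangle}$ with $c(s)=z$, $c(s^{2^i})=b^{(i)}$ for $i>0$, $c(s^k)=1$ otherwise;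 $G=\langle c,s\rangle\le K\,\mathrm{Wr}\,\langle s\rangle$. *)

(* Defs.v *)
From Stdlib Require Import ZArith List Lia FunctionalExtensionality Bool.
Import ListNotations.
Open Scope Z_scope.

Record group := Group {
  gcar :> Type;
  gmul : gcar -> gcar -> gcar;
  gone : gcar;
  ginv : gcar -> gcar;
  gmulA : forall x y z, gmul x (gmul y z) = gmul (gmul x y) z;
  gmul1 : forall x, gmul gone x = x;
  gmulV : forall x, gmul (ginv x) x = gone
}.
Arguments gmul {g}. Arguments gone {g}. Arguments ginv {g}.

Definition gpow_nat {G : group} (x : G) (n : nat) : G :=
  Nat.iter n (gmul x) gone.
Definition gpow {G : group} (x : G) (k : Z) : G :=
  match k with
  | Z0 => gone
  | Zpos p => gpow_nat x (Pos.to_nat p)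
  | Zneg p => ginv (gpow_nat x (Pos.to_nat p))
  end.

(* conjugation, following the paper's notation  x^y = y x y^{-1} *)
Definition gconj {G : group} (x y : G) : G := gmul y (gmul x (ginv y)).

Definition gprod {G : group} (l : list G) : G := fold_right gmul gone l.

Inductive generated {G : group} (S : G -> Prop) : G -> Prop :=
| gen_in x : S x -> generated S x
| gen_one : generated S gone
| gen_mul x y : generated S x -> generated S y -> generated S (gmul x y)
| gen_inv x : generated S x -> generated S (ginv x).

(* Unrestricted wreath product  A Wr Z  with Z = <t> infinite cyclic.
   An element f t^k (f : Z -> A, the function t^x |-> f x) is the pair (f, k).
   Since t^k f t^-k = f^{t^k} with f^{t^k}(t^x) = f(t^(x+k)),
   (f,k)(g,m) = (x |-> f x * g (x+k), k+m). *)
Definition wr_mul (A : group) (u v : (Z -> A) * Z) : (Z -> A) * Z :=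
  (fun x => gmul (fst u x) (fst v (x + snd u)), snd u + snd v).
Definition wr_one (A : group) : (Z -> A) * Z := (fun _ => gone, 0).
Definition wr_inv (A : group) (u : (Z -> A) * Z) : (Z -> A) * Z :=
  (fun x => ginv (fst u (x - snd u)), - snd u).

Lemma wr_mulA (A : group) x y z :
  wr_mul A x (wr_mul A y z) = wr_mul A (wr_mul A x y) z.
Proof.
  destruct x as [f k], y as [g m], z as [h n]; unfold wr_mul; simpl.
  f_equal; [apply functional_extensionality; intro t; rewrite gmulA, Z.add_assoc; reflexivity | lia].
Qed.

Lemma wr_mul1 (A : group) x : wr_mul A (wr_one A) x = x.
Proof.
  destruct x as [f k]; unfold wr_mul, wr_one; simpl.
  f_equal; apply functional_extensionality; intro t; rewrite gmul1, Z.add_0_r; reflexivity.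
Qed.

Lemma wr_mulV (A : group) x : wr_mul A (wr_inv A x) x = wr_one A.
Proof.
  destruct x as [f k]; unfold wr_mul, wr_inv, wr_one; simpl.
  f_equal; [apply functional_extensionality; intro t; rewrite Z.add_opp_r, gmulV; reflexivity | lia].
Qed.

Definition WrZ (A : group) : group :=
  Group ((Z -> A) * Z) (wr_mul A) (wr_one A) (wr_inv A) (wr_mulA A) (wr_mul1 A) (wr_mulV A).

Definition wr_top (A : group) : WrZ A := (fun _ => gone, 1).
Definition wr_base {A : group} (u : WrZ A) : Z -> A := fst u.

(* --- The groups of the paper, given H and its generators a^(1), a^(2), ... (a : nat -> H, a 0 unused) --- *)

Definition z_el (H : group) : WrZ H := wr_top H.
Definition b_el (H : group) (a : nat -> H) (i : nat) : WrZ H :=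
  (fun k => if 0 <? k then a i else gone, 0).

(* K <= H Wr Z; we work in the ambient group (H Wr Z) Wr <s>, which contains
   K Wr <s> (and hence G = <c, s>) as a subgroup. *)
Definition KWr (H : group) : group := WrZ (WrZ H).

(* c : s^1 |-> z, s^(2^i) |-> b^(i) (i > 0), s^k |-> 1 otherwise *)
Definition c_fun (H : group) (a : nat -> H) (mu : Z) : WrZ H :=
  if mu =? 1 then z_el H
  else if andb (1 <? mu) (2 ^ Z.log2 mu =? mu) then b_el H a (Z.to_nat (Z.log2 mu))
  else gone.
Definition c_el (H : group) (a : nat -> H) : KWr H := (c_fun H a, 0).
Definition s_el (H : group) : KWr H := wr_top (WrZ H).

Definition F_el (H : group) (a : nat -> H) (n : nat) (gam bet : nat -> Z) : KWr H :=
  gprod (map (fun i => gpow (gconj (c_el H a) (gpow (s_el H) (gam i))) (bet i)) (seq 1 n)).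

Definition block_sum (n : nat) (gam bet : nat -> Z) (i : nat) : Z :=
  fold_right Z.add 0 (map bet (filter (fun j => gam j =? gam i) (seq 1 n))).

Definition gam0 (n : nat) (gam : nat -> Z) : Z :=
  fold_right Z.max 0 (map (fun j => Z.abs (gam j)) (seq 1 n)).

(* Main.v *)
Require Import Defs.
From Stdlib Require Import ZArith List Lia FunctionalExtensionality Bool Classical.
Import ListNotations.
Open Scope Z_scope.

Arguments gmulA {g}. Arguments gmul1 {g}. Arguments gmulV {g}.
Section Grp.
Variable G : group.
Implicit Types x y z : G.
Lemma mulV_r x : gmul x (ginv x) = gone.
Proof.
  rewrite <- (gmul1 (gmul x (ginv x))).
  rewrite <- (gmulV (ginv x)) at 1.
  rewrite <- gmulA. rewrite (gmulA (ginv x) x (ginv x)). rewrite gmulV, gmul1. apply gmulV.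
Qed.
Lemma mul1_r x : gmul x gone = x.
Proof. rewrite <- (gmulV x), gmulA, mulV_r, gmul1. reflexivity. Qed.
Lemma inv_uniq (u v : G) : gmul u v = gone -> u = ginv v.
Proof. intro H. rewrite <- (mul1_r u), <- (mulV_r v), gmulA, H, gmul1. reflexivity. Qed.
Lemma inv_one : @ginv G gone = gone.
Proof. symmetry; apply inv_uniq; apply gmul1. Qed.
Lemma inv_mul x y : ginv (gmul x y) = gmul (ginv y) (ginv x).
Proof. symmetry; apply inv_uniq. rewrite <- gmulA, (gmulA (ginv x) x y), gmulV, gmul1, gmulV. reflexivity. Qed.
Lemma gpow_nat_comm x m : gmul x (gpow_nat x m) = gmul (gpow_nat x m) x.
Proof.
  induction m; unfold gpow_nat in *; simpl.
  - rewrite mul1_r, gmul1; reflexivity.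
  - rewrite <- gmulA, <- IHm. reflexivity.
Qed.
Lemma gpow_succ x k : gpow x (Z.succ k) = gmul x (gpow x k).
Proof.
  destruct k as [|p|p].
  - reflexivity.
  - rewrite <- Pos2Z.inj_succ. unfold gpow. rewrite Pos2Nat.inj_succ. reflexivity.
  - destruct (Pos.succ_pred_or p) as [->|Hp].
    + simpl. unfold gpow_nat; simpl. rewrite mul1_r, mulV_r. reflexivity.
    + rewrite <- Hp. replace (Z.succ (Zneg (Pos.succ (Pos.pred p)))) with (Zneg (Pos.pred p)) by lia.
      unfold gpow. rewrite Pos2Nat.inj_succ.
      change (gpow_nat x (S (Pos.to_nat (Pos.pred p)))) with (gmul x (gpow_nat x (Pos.to_nat (Pos.pred p)))).
      rewrite gpow_nat_comm, inv_mul, gmulA, mulV_r, gmul1. reflexivity.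
Qed.
Lemma gpow_pred x k : gpow x (Z.pred k) = gmul (ginv x) (gpow x k).
Proof. rewrite <- (Z.succ_pred k) at 2. rewrite gpow_succ, gmulA, gmulV, gmul1. reflexivity. Qed.
Lemma gpow_add x a b : gpow x (a + b) = gmul (gpow x a) (gpow x b).
Proof.
  induction a using Z.peano_ind.
  - simpl. rewrite gmul1. reflexivity.
  - rewrite Z.add_succ_l, !gpow_succ, IHa, gmulA. reflexivity.
  - rewrite Z.add_pred_l, !gpow_pred, IHa, gmulA. reflexivity.
Qed.
Lemma gpow_one k : gpow (@gone G) k = gone.
Proof.
  assert (E : forall m, gpow_nat (@gone G) m = gone).
  { induction m; unfold gpow_nat in *; simpl; [reflexivity| rewrite IHm, gmul1; reflexivity]. }
  destruct k; simpl; rewrite ?E, ?inv_one; reflexivity.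
Qed.
End Grp.
Lemma gpow_nat_S (G : group) (x : G) m : gpow_nat x (S m) = gmul x (gpow_nat x m).
Proof. reflexivity. Qed.
Lemma gpow_nat_0 (G : group) (x : G) : gpow_nat x 0 = gone.
Proof. reflexivity. Qed.
Lemma gpow_neg (G : group) (x : G) p : gpow x (Zneg p) = ginv (gpow_nat x (Pos.to_nat p)).
Proof. reflexivity. Qed.
Lemma gpow_pos (G : group) (x : G) p : gpow x (Zpos p) = gpow_nat x (Pos.to_nat p).
Proof. reflexivity. Qed.
Lemma gpow_0 (G : group) (x : G) : gpow x 0 = gone.
Proof. reflexivity. Qed.
Lemma gprod_cons (G : group) (x : G) l : gprod (x :: l) = gmul x (gprod l).
Proof. reflexivity. Qed.
Lemma gprod_nil (G : group) : gprod (@nil G) = gone.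
Proof. reflexivity. Qed.

Section W.
Variable A : group.
Lemma wfm (u v : WrZ A) x : fst (gmul u v) x = gmul (fst u x) (fst v (x + snd u)).
Proof. reflexivity. Qed.
Lemma wsm (u v : WrZ A) : snd (gmul u v) = snd u + snd v.
Proof. reflexivity. Qed.
Lemma wfi (u : WrZ A) x : fst (ginv u) x = ginv (fst u (x - snd u)).
Proof. reflexivity. Qed.
Lemma wsi (u : WrZ A) : snd (ginv u) = - snd u.
Proof. reflexivity. Qed.
Lemma wf1 x : fst (@gone (WrZ A)) x = gone.
Proof. reflexivity. Qed.
Lemma ws1 : snd (@gone (WrZ A)) = 0.
Proof. reflexivity. Qed.
Lemma wext (u v : WrZ A) : (forall x, fst u x = fst v x) -> snd u = snd v -> u = v.
Proof. destruct u, v; simpl; intros. f_equal; [apply functional_extensionality; auto | auto]. Qed.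

Lemma wspow (u : WrZ A) k : snd (gpow u k) = k * snd u.
Proof.
  assert (E : forall m, snd (gpow_nat u m) = Z.of_nat m * snd u).
  { induction m; rewrite ?gpow_nat_0, ?gpow_nat_S. reflexivity.
    rewrite wsm, IHm. lia. }
  destruct k; rewrite ?gpow_0, ?gpow_pos, ?gpow_neg; rewrite ?wsi, ?E, ?positive_nat_Z; try reflexivity. rewrite <- Pos2Z.opp_pos. ring.
Qed.

Lemma wfpow (u : WrZ A) k x : snd u = 0 -> fst (gpow u k) x = gpow (fst u x) k.
Proof.
  intro H0.
  assert (E : forall m x, fst (gpow_nat u m) x = gpow_nat (fst u x) m).
  { induction m; intro y; rewrite ?gpow_nat_0, ?gpow_nat_S. reflexivity.
    rewrite wfm, H0, Z.add_0_r, IHm. reflexivity. }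
  destruct k; rewrite ?gpow_0, ?gpow_pos, ?gpow_neg; try reflexivity.
  - apply E.
  - rewrite wfi. rewrite <- gpow_pos. rewrite wspow, H0, Z.mul_0_r, Z.sub_0_r.
    rewrite gpow_pos, E. reflexivity.
Qed.

Lemma wtop (k : Z) : snd (gpow (wr_top A) k) = k /\ forall x, fst (gpow (wr_top A) k) x = gone.
Proof.
  split. rewrite wspow. simpl. lia.
  assert (E : forall m x, fst (gpow_nat (wr_top A) m) x = gone).
  { induction m; intro y; rewrite ?gpow_nat_0, ?gpow_nat_S. reflexivity.
    rewrite wfm, IHm. apply gmul1. }
  intro x; destruct k; rewrite ?gpow_0, ?gpow_pos, ?gpow_neg; try reflexivity.
  - apply E.
  - rewrite wfi, E. apply inv_one.
Qed.

Lemma wprod (g : nat -> WrZ A) l : (forall i, snd (g i) = 0) ->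
  snd (gprod (map g l)) = 0 /\ forall x, fst (gprod (map g l)) x = gprod (map (fun i => fst (g i) x) l).
Proof.
  intro Hg; induction l as [|i l IH]; cbn [map]; rewrite ?gprod_cons, ?gprod_nil.
  - split; reflexivity.
  - destruct IH as [IH1 IH2]. split.
    + rewrite wsm, Hg, IH1. reflexivity.
    + intro x. rewrite wfm, Hg, Z.add_0_r, IH2. reflexivity.
Qed.

Lemma wsprod (g : nat -> WrZ A) (bet : nat -> Z) l :
  snd (gprod (map (fun j => gpow (g j) (bet j)) l)) = fold_right Z.add 0 (map (fun j => bet j * snd (g j)) l).
Proof.
  induction l; cbn [map]; rewrite ?gprod_cons, ?gprod_nil. reflexivity. rewrite wsm, wspow, IHl. reflexivity.
Qed.
End W.

Lemma gprod_pow (G : group) (x : G) (P : nat -> bool) (bet : nat -> Z) l :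
  gprod (map (fun j => gpow (if P j then x else gone) (bet j)) l) = gpow x (fold_right Z.add 0 (map bet (filter P l))).
Proof.
  induction l as [|j l IH]; cbn [map filter]; rewrite ?gprod_nil. reflexivity.
  destruct (P j); cbn [map fold_right]; rewrite gprod_cons, IH.
  - rewrite gpow_add. reflexivity.
  - rewrite gpow_one, gmul1. reflexivity.
Qed.

Lemma sum_ind (P : nat -> bool) (bet : nat -> Z) l :
  fold_right Z.add 0 (map (fun j => bet j * (if P j then 1 else 0)) l) = fold_right Z.add 0 (map bet (filter P l)).
Proof. induction l as [|j l IH]; simpl. reflexivity. destruct (P j); simpl; rewrite IH; lia. Qed.

Lemma fold_max_ge l x : In x l -> x <= fold_right Z.max 0 l.
Proof. induction l; simpl; [tauto|]. intros [->|H]; [lia| specialize (IHl H); lia]. Qed.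
Lemma fold_max_nn l : 0 <= fold_right Z.max 0 l.
Proof. induction l; simpl; lia. Qed.

Lemma conj_c (H : group) a g :
  snd (gconj (c_el H a) (gpow (s_el H) g)) = 0 /\
  forall x, fst (gconj (c_el H a) (gpow (s_el H) g)) x = c_fun H a (x + g).
Proof.
  destruct (wtop (WrZ H) g) as [E1 E2].
  unfold gconj, s_el, KWr in *. split.
  - rewrite !wsm, wsi, E1. unfold c_el; cbn [snd]. lia.
  - intro x. rewrite !wfm, wfi, E1, E2, E2, gmul1, inv_one, mul1_r.
    unfold c_el; cbn [fst snd]. reflexivity.
Qed.

Lemma Fval (H : group) a n gam bet :
  snd (F_el H a n gam bet) = 0 /\ forall mu, fst (F_el H a n gam bet) mu =
    gprod (map (fun i => gpow (c_fun H a (mu + gam i)) (bet i)) (seq 1 n)).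
Proof.
  unfold F_el.
  assert (Hs : forall i, snd (gpow (gconj (c_el H a) (gpow (s_el H) (gam i))) (bet i)) = 0).
  { intro i. rewrite wspow. rewrite (proj1 (conj_c H a (gam i))). lia. }
  destruct (wprod (WrZ H) _ (seq 1 n) Hs) as [P1 P2]. split; [exact P1|].
  intro mu. rewrite P2. f_equal. apply map_ext. intro i.
  rewrite wfpow by apply (proj1 (conj_c H a (gam i))).
  rewrite (proj2 (conj_c H a (gam i))). reflexivity.
Qed.

Definition pow2b (m : Z) : bool := (m =? 1) || ((1 <? m) && (2 ^ Z.log2 m =? m)).

Lemma c_gone H a m : pow2b m = false -> c_fun H a m = gone.
Proof.
  unfold pow2b, c_fun. intro E. apply orb_false_iff in E. destruct E as [E1 E2].
  rewrite E1, E2. reflexivity.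
Qed.

Lemma c_snd H a m : snd (c_fun H a m) = if m =? 1 then 1 else 0.
Proof. unfold c_fun. destruct (m =? 1); [reflexivity|]. destruct andb; reflexivity. Qed.

Lemma pow2_spec m : pow2b m = true -> 1 <= m /\ 2 ^ Z.log2 m = m.
Proof.
  unfold pow2b. intro E. apply orb_true_iff in E. destruct E as [E|E].
  - apply Z.eqb_eq in E. subst. split; reflexivity.
  - apply andb_true_iff in E. destruct E as [E1 E2]. apply Z.ltb_lt in E1. apply Z.eqb_eq in E2. split; lia.
Qed.

Lemma pow2_uniq m1 m2 : pow2b m1 = true -> pow2b m2 = true -> m1 <= m2 -> m2 - m1 < m1 -> m1 = m2.
Proof.
  intros H1 H2 Hle Hlt. destruct (pow2_spec _ H1) as [A1 B1]. destruct (pow2_spec _ H2) as [A2 B2].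
  assert (L : Z.log2 m1 <= Z.log2 m2) by (apply Z.log2_le_mono; lia).
  assert (N : 0 <= Z.log2 m1) by apply Z.log2_nonneg.
  destruct (Z.eq_dec (Z.log2 m1) (Z.log2 m2)) as [e|ne].
  - rewrite <- B1, <- B2, e. reflexivity.
  - assert (P : 2 ^ (Z.log2 m1 + 1) <= 2 ^ Z.log2 m2) by (apply Z.pow_le_mono_r; lia).
    rewrite Z.pow_add_r in P by lia. lia.
Qed.

Lemma prod_gen (H : group) a (mu : Z) (gam bet : nat -> Z) l (x : WrZ H) (P : nat -> bool) :
  (forall j, In j l -> c_fun H a (mu + gam j) = if P j then x else gone) ->
  gprod (map (fun i => gpow (c_fun H a (mu + gam i)) (bet i)) l) =
  gpow x (fold_right Z.add 0 (map bet (filter P l))).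
Proof.
  intro Hj. rewrite <- gprod_pow. f_equal. apply map_ext_in. intros j Hin. rewrite Hj by exact Hin. reflexivity.
Qed.

Theorem lemma4 (H : group) (a : nat -> H)
  (Hgen : forall h : H, generated (fun x => exists i : nat, (0 < i)%nat /\ x = a i) h)
  (n : nat) (Hn : (1 <= n)%nat) (gamma : Z) (gam bet : nat -> Z) :
  gmul (F_el H a n gam bet) (gpow (s_el H) gamma) = gone
  <->
  (gamma = 0 /\
   (forall i : nat, (1 <= i <= n)%nat -> block_sum n gam bet i = 0) /\
   (forall mu : Z, - 3 * gam0 n gam <= mu <= 3 * gam0 n gam ->
      wr_base (F_el H a n gam bet) mu = gone)).
Proof.
  destruct (Fval H a n gam bet) as [S1 S2].
  destruct (wtop (WrZ H) gamma) as [T1 T2].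
  unfold s_el, KWr in *.
  split.
  - intro E.
    assert (Eg : gamma = 0).
    { apply (f_equal snd) in E. rewrite wsm, S1, T1, ws1 in E. lia. }
    assert (Ef : forall mu, fst (F_el H a n gam bet) mu = gone).
    { intro mu. apply (f_equal (fun u => fst u mu)) in E. cbv beta in E.
      rewrite wfm, T2, mul1_r, wf1 in E. exact E. }
    split; [exact Eg|]. split.
    + intros i Hi. specialize (Ef (1 - gam i)). rewrite S2 in Ef.
      apply (f_equal snd) in Ef.
      rewrite (wsprod H (fun j => c_fun H a (1 - gam i + gam j)) bet) in Ef.
      rewrite ws1 in Ef. unfold block_sum. rewrite <- sum_ind. etransitivity; [|exact Ef].
      apply (f_equal (fold_right Z.add 0)). apply map_ext. intro j. rewrite c_snd.
      destruct (Z.eqb_spec (1 - gam i + gam j) 1), (Z.eqb_spec (gam j) (gam i)); lia.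
    + intros mu _. unfold wr_base. apply Ef.
  - intros [-> [Hb Hm]].
    rewrite gpow_0, mul1_r. apply wext; [|rewrite S1, ws1; reflexivity].
    intro mu. rewrite wf1.
    set (g0 := gam0 n gam) in *.
    assert (Hbd : forall j, In j (seq 1 n) -> Z.abs (gam j) <= g0).
    { intros j Hj. apply fold_max_ge. apply in_map_iff. exists j. split; auto. }
    assert (Hg0 : 0 <= g0) by apply fold_max_nn.
    destruct (Z_le_gt_dec mu (3 * g0)) as [h1|h1]; destruct (Z_le_gt_dec (-3 * g0) mu) as [h2|h2].
    + apply Hm. lia.
    + rewrite S2. rewrite (prod_gen H a mu gam bet (seq 1 n) gone (fun _ => false)).
      * apply gpow_one.
      * intros j Hj. apply c_gone. destruct (pow2b (mu + gam j)) eqn:P; [|reflexivity].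
        apply pow2_spec in P. specialize (Hbd j Hj). lia.
    + rewrite S2.
      destruct (classic (exists j0, In j0 (seq 1 n) /\ pow2b (mu + gam j0) = true)) as [[j0 [Hj0 Pj0]]|Hno].
      * rewrite (prod_gen H a mu gam bet (seq 1 n) (c_fun H a (mu + gam j0)) (fun j => gam j =? gam j0)).
        -- change (fold_right Z.add 0 (map bet (filter (fun j => gam j =? gam j0) (seq 1 n))))
             with (block_sum n gam bet j0).
           rewrite Hb. reflexivity. apply in_seq in Hj0. lia.
        -- intros j Hj. destruct (Z.eqb_spec (gam j) (gam j0)) as [e|ne].
           ++ rewrite e. reflexivity.
           ++ apply c_gone. destruct (pow2b (mu + gam j)) eqn:P; [|reflexivity].
              exfalso. apply ne.
              pose proof (Hbd j Hj). pose proof (Hbd j0 Hj0).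
              destruct (Z.le_ge_cases (mu + gam j) (mu + gam j0)).
              ** assert (mu + gam j = mu + gam j0) by (apply pow2_uniq; auto; lia). lia.
              ** assert (mu + gam j0 = mu + gam j) by (apply pow2_uniq; auto; lia). lia.
      * rewrite (prod_gen H a mu gam bet (seq 1 n) gone (fun _ => false)).
        -- apply gpow_one.
        -- intros j Hj. apply c_gone. destruct (pow2b (mu + gam j)) eqn:P; [|reflexivity].
           exfalso. apply Hno. exists j. auto.
    + lia.
Qed.
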